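(* For every integer $n\ge 0$, \[ (p_{2,5}+p_{3,5})(n)=p(n)+\sum_{k=1}^\infty (-1)^k \big(p(n-P_{7,k}) +p(n-Q_{7,k})\big),\] where $P_{7,k}=\frac{k(5k-3)}{2}$ and $Q_{7,k}=\frac{k(5k+3)}{2}$.
   Context: $p(n)$ is the number of integer partitions of $n$, with $p(0)=1$ and $p(x)=0$ for $x<0$. $(p_{2,5}+p_{3,5})(n)$ denotes the number of partitions of $n$ in which every part is congruent to $2$ or to $3$ modulo $5$ (equal to $1$ for $n=0$, and $0$ for $n\notin\mathbb{N}_0$). *)

(* Defs.v *)
From mathcomp Require Import all_boot all_order all_algebra.
Set Implicit Arguments. Unset Strict Implicit. Unset Printing Implicit Defensive.
Import GRing.Theory Num.Theory.

(* A partition of n is encoded by its multiplicity function: m i = number of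
   parts equal to i.+1 (parts lie in 1..n, each multiplicity is <= n, so
   m : {ffun 'I_n -> 'I_n.+1}). *)
Definition is_partition_with (P : pred nat) (n : nat) (m : {ffun 'I_n -> 'I_n.+1}) : bool :=
  ((\sum_(i < n) i.+1 * m i)%N == n) && [forall i, (0 < m i)%N ==> P i.+1].

Definition npart_with (P : pred nat) (n : nat) : nat :=
  #|[set m : {ffun 'I_n -> 'I_n.+1} | @is_partition_with P n m]|.

Definition npart (n : nat) : nat := npart_with predT n.

Definition npart23mod5 (n : nat) : nat :=
  npart_with (fun a => (a %% 5 == 2) || (a %% 5 == 3))%N n.

Definition npartZ (x : int) : int :=
  match x with Posz n => (npart n)%:Z | Negz _ => 0 end.

Definition P7 (k : nat) : nat := (k * (5 * k - 3)) %/ 2.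
Definition Q7 (k : nat) : nat := (k * (5 * k + 3)) %/ 2.

(* Main.v *)
Require Import Defs.
From mathcomp Require Import all_boot all_order all_algebra.
From mathcomp Require Import zify ring.
Import GRing.Theory Num.Theory.
Local Open Scope ring_scope.

Notation PZ := {poly int}.


Definition eqm (n : nat) (p q : PZ) := forall i, (i <= n)%N -> p`_i = q`_i.

Lemma eqm_refl n p : eqm n p p. Proof. by []. Qed.
Lemma eqm_sym n p q : eqm n p q -> eqm n q p. Proof. by move=> h i hi; rewrite h. Qed.
Lemma eqm_trans n p q r : eqm n p q -> eqm n q r -> eqm n p r.
Proof. by move=> h1 h2 i hi; rewrite h1 // h2. Qed.
Lemma eqmD n p p' q q' : eqm n p p' -> eqm n q q' -> eqm n (p + q) (p' + q').
Proof. by move=> h1 h2 i hi; rewrite !coefD h1 // h2. Qed.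
Lemma eqmN n p p' : eqm n p p' -> eqm n (- p) (- p').
Proof. by move=> h1 i hi; rewrite !coefN h1. Qed.
Lemma eqmM n p p' q q' : eqm n p p' -> eqm n q q' -> eqm n (p * q) (p' * q').
Proof.
move=> h1 h2 i hi; rewrite !coefM; apply: eq_bigr => j _.
have hj : (j <= n)%N by apply: leq_trans hi; rewrite -ltnS.
rewrite h1 // h2 //; exact: leq_trans (leq_subr _ _) hi.
Qed.
Lemma eqm_prod n (I : Type) (r : seq I) (P : pred I) (F G : I -> PZ) :
  (forall i, P i -> eqm n (F i) (G i)) ->
  eqm n (\prod_(i <- r | P i) F i) (\prod_(i <- r | P i) G i).
Proof. move=> h; apply: big_ind2 => //; move=> *; exact: eqmM. Qed.
Lemma eqm_sum n (I : Type) (r : seq I) (P : pred I) (F G : I -> PZ) :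
  (forall i, P i -> eqm n (F i) (G i)) ->
  eqm n (\sum_(i <- r | P i) F i) (\sum_(i <- r | P i) G i).
Proof. move=> h; apply: big_ind2 => //; move=> *; exact: eqmD. Qed.
Lemma eqmXn0 n a p : (n < a)%N -> eqm n ('X^a * p) 0.
Proof.
move=> ha i hi; rewrite coefXnM coef0.
by rewrite (leq_ltn_trans hi ha).
Qed.
Lemma eqmX0 n a : (n < a)%N -> eqm n 'X^a 0.
Proof. by move=> ha; rewrite -(mulr1 'X^a); exact: eqmXn0. Qed.

Lemma prod_trunc n (F : nat -> PZ) a b : (a <= b)%N ->
  (forall i, (a <= i)%N -> eqm n (F i) 1) ->
  eqm n (\prod_(i < b) F i) (\prod_(i < a) F i).
Proof.
move=> hab h; elim: b hab => [|b IH] hab.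
  by rewrite leqn0 in hab; move/eqP: hab => ->; exact: eqm_refl.
rewrite leq_eqVlt in hab; case/orP: hab => [/eqP -> | hab]; first exact: eqm_refl.
rewrite big_ord_recr /= -[X in eqm _ _ X]mulr1.
by apply: eqmM; [exact: IH | exact: h].
Qed.

Lemma sum_trunc n (F : nat -> PZ) a b : (a <= b)%N ->
  (forall i, (a <= i)%N -> eqm n (F i) 0) ->
  eqm n (\sum_(i < b) F i) (\sum_(i < a) F i).
Proof.
move=> hab h; elim: b hab => [|b IH] hab.
  by rewrite leqn0 in hab; move/eqP: hab => ->; exact: eqm_refl.
rewrite leq_eqVlt in hab; case/orP: hab => [/eqP -> | hab]; first exact: eqm_refl.
rewrite big_ord_recr /= -[X in eqm _ _ X]addr0.
by apply: eqmD; [exact: IH | exact: h].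
Qed.

Definition Fp (P : pred nat) (i t : nat) : PZ :=
  if (t == 0%N) || P i.+1 then 'X^(i.+1 * t) else 0.
Definition PG (P : pred nat) (M : nat) : PZ :=
  \prod_(i < M) \sum_(t < M.+1) Fp P i t.

Lemma PG_term P n (g : {ffun 'I_n -> 'I_n.+1}) : \prod_(i < n) Fp P i (g i) =
   if [forall i, (0 < g i)%N ==> P i.+1] then 'X^(\sum_(i < n) i.+1 * g i) else 0.
Proof.
  case: ifP => [/forallP hall | /negbT].
    rewrite -prodrXr; apply: eq_bigr => i _; rewrite /Fp.
    by case: (g i) (hall i) => [[|t]] ? //= ->.
  rewrite negb_forall => /existsP [i]; rewrite negb_imply => /andP [hg hP].
  rewrite (bigD1 i) //= /Fp ifN ?mul0r //.
  by rewrite negb_or hP andbT -lt0n.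
Qed.

Lemma PG_coef P n : (PG P n)`_n = (npart_with P n)%:R.
Proof.
rewrite /PG (bigA_distr_bigA (fun (i : 'I_n) (t : 'I_n.+1) => Fp P i t)) coef_sum.
rewrite (eq_bigr (fun g : {ffun 'I_n -> 'I_n.+1} => (is_partition_with P g : nat)%:R)); last first.
  move=> g _; have := PG_term P n g => /= E; rewrite E.
  rewrite /is_partition_with.
  case: ifP => _; last by rewrite coef0 andbF.
  by rewrite coefXn andbT eq_sym.
rewrite /npart_with -natr_sum; congr (_%:R).
rewrite cardsE -sum1_card [RHS]big_mkcond /=; apply: eq_bigr => g _.
by change ((is_partition_with P g : nat) = (if is_partition_with P g then 1 else 0)%N); case: (is_partition_with P g).
Qed.

Lemma Fp_small P n i t : (n < i.+1 * t)%N -> eqm n (Fp P i t) 0.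
Proof. by move=> h; rewrite /Fp; case: ifP => _; [exact: eqmX0 | exact: eqm_refl]. Qed.

Lemma PG_trunc P i M : (i <= M)%N -> eqm i (PG P M) (PG P i).
Proof.
move=> hiM; rewrite /PG.
apply: eqm_trans (@prod_trunc i (fun j => \sum_(t < M.+1) Fp P j t) i M hiM _) _.
  move=> j hj; apply: eqm_trans (@sum_trunc i (fun t => Fp P j t) 1 M.+1 _ _) _ => //.
    move=> t ht; apply: Fp_small; apply: (leq_trans (n := j.+1)); first by [].
    by rewrite -{1}(muln1 j.+1) leq_mul2l.
  by rewrite big_ord1 /Fp /= muln0 expr0; exact: eqm_refl.
apply: eqm_prod => j _ /=.
apply: sum_trunc => //.
move=> t ht; apply: Fp_small; apply: (leq_trans ht).
by rewrite leq_pmull.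
Qed.

Lemma PG_coef_le P i M : (i <= M)%N -> (PG P M)`_i = (npart_with P i)%:R.
Proof. by move=> h; rewrite (@PG_trunc P i M h) // PG_coef. Qed.


Fixpoint qbin (Q : PZ) (N j : nat) : PZ :=
  match N, j with
  | _, 0%N => 1
  | 0%N, _.+1 => 0
  | N'.+1, j'.+1 => Q ^+ (N' - j') * qbin Q N' j' + qbin Q N' j'.+1
  end.

Lemma qbin0 Q N : qbin Q N 0 = 1. Proof. by case: N. Qed.

Lemma qbin_gt Q N j : (N < j)%N -> qbin Q N j = 0.
Proof.
elim: N j => [|N IH] [|j] //= h.
by rewrite IH // IH ?mulr0 ?addr0 // ltnW.
Qed.

Lemma qbin_thm (Q y z : PZ) N :
  \prod_(i < N) (y + z * Q ^+ i) =
  \sum_(j < N.+1) qbin Q N j * Q ^+ 'C(j, 2) * z ^+ j * y ^+ (N - j).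
Proof.
elim: N => [|N IH].
  by rewrite big_ord0 big_ord1 /= !mul1r.
rewrite big_ord_recr /= IH [RHS]big_ord_recl /= mulrDr !mulr_suml.
rewrite big_ord_recl /=.
under [X in _ = _ + X]eq_bigr => j _ do rewrite /bump /= add1n mulrDl mulrDl mulrDl.
rewrite big_split /= [X in _ = _ + (_ + X)]big_ord_recr /=.
rewrite !add0n (@qbin_gt Q N N.+1) // !mul0r addr0 !qbin0 !subn0 !expr0 !mul1r -exprSr.
rewrite -!addrA; congr (_ + _).
rewrite addrC; congr (_ + _).
  apply: eq_bigr => j _; rewrite /bump /= ?add1n ?add0n.
  have hj := ltn_ord j.
  have e1 : 'C(j.+1, 2) = ('C(j, 2) + j)%N by rewrite binS bin1.
  have e3 : Q ^+ N = Q ^+ (N - j) * Q ^+ j by rewrite -exprD subnK // -ltnS.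
  rewrite e1 e3 subSS !exprD exprS; ring.
apply: eq_bigr => j _; rewrite /bump /= ?add1n ?add0n.
have hj := ltn_ord j.
have e2 : (N - j = (N - j.+1).+1)%N by rewrite subnSK.
rewrite subSS e2 [y ^+ _.+1]exprSr; ring.
Qed.

Lemma qbinn Q N : qbin Q N N = 1.
Proof. by elim: N => //= N ->; rewrite subnn expr0 mulr1 qbin_gt // addr0. Qed.

Definition qp (Q : PZ) (r : nat) : PZ := \prod_(i < r) (1 - Q ^+ i.+1).

Lemma qpS Q r : qp Q r.+1 = qp Q r * (1 - Q ^+ r.+1).
Proof. by rewrite /qp big_ord_recr. Qed.

Lemma qbin_prod Q N j : (j <= N)%N -> qbin Q N j * qp Q j * qp Q (N - j) = qp Q N.
Proof.
elim: N j => [|N IH] [|j] //= hj.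
- by rewrite /qp !big_ord0 !mul1r.
- by rewrite /qp big_ord0 !mul1r subn0.
rewrite subSS mulrDl mulrDl.
rewrite leq_eqVlt in hj; case/orP: hj => [/eqP [->] | hj].
  rewrite (@qbin_gt Q N N.+1) // !mul0r addr0 subnn.
  by rewrite qbinn /qp big_ord0 expr0 !mulr1 mul1r.
have hj' : (j < N)%N by [].
have E1 := IH j (ltnW hj').
have E2 := IH j.+1 hj'.
have e : (N - j = (N - j.+1).+1)%N by rewrite subnSK.
have E1' : qbin Q N j * (qp Q j.+1 * qp Q (N - j)) = (1 - Q ^+ j.+1) * qp Q N.
  by rewrite -E1 qpS; ring.
have E2' : qbin Q N j.+1 * qp Q j.+1 * qp Q (N - j) = (1 - Q ^+ (N - j)) * qp Q N.
  by rewrite -E2 {1}e (qpS Q (N - j.+1)) -e; ring.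
rewrite E2' -!mulrA E1' qpS.
have e3 : Q ^+ N.+1 = Q ^+ (N - j) * Q ^+ j.+1 by rewrite -exprD addnS subnK // ltnW.
rewrite e3; ring.
Qed.


Lemma bin2S x : 'C(x.+1, 2) = ('C(x, 2) + x)%N.
Proof. by rewrite binS bin1. Qed.

Lemma bin2_2 x : (2 * 'C(x, 2) = x * x.-1)%N.
Proof. elim: x => // x IH; rewrite bin2S mulnDr IH /=; case: x {IH} => //= x; nia. Qed.

Lemma P7E k : P7 k = (5 * 'C(k, 2) + k)%N.
Proof.
rewrite /P7 (_ : k * (5 * k - 3) = 2 * (5 * 'C(k, 2) + k))%N ?mulKn //.
have := bin2_2 k; case: k => //= k; nia.
Qed.

Lemma Q7E k : Q7 k = (5 * 'C(k, 2) + 4 * k)%N.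
Proof.
rewrite /Q7 (_ : k * (5 * k + 3) = 2 * (5 * 'C(k, 2) + 4 * k))%N ?mulKn //.
have := bin2_2 k; case: k => //= k; nia.
Qed.

Lemma bin2D a b : 'C(a + b, 2) = ('C(a, 2) + 'C(b, 2) + a * b)%N.
Proof. elim: b => [|b IH]; first by rewrite addn0 muln0 bin0n !addn0.
rewrite addnS !bin2S IH; nia. Qed.

Definition KK m := (5 * 'C(m, 2) + (5 * m - 1) * m)%N.

Lemma expoP m k : (k <= m)%N ->
  (5 * 'C(k + m, 2) + (5 * m - 1) * (m + m - (k + m)) = KK m + P7 k)%N.
Proof.
move=> hk; rewrite P7E /KK bin2D.
have -> : (m + m - (k + m) = m - k)%N by lia.
nia.
Qed.

Lemma expoQ m k : (k <= m)%N ->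
  (5 * 'C(m - k, 2) + (5 * m - 1) * (m + m - (m - k)) = KK m + Q7 k)%N.
Proof.
move=> hk; rewrite Q7E /KK.
have e : m = ((m - k) + k)%N by lia.
have h := bin2D (m - k) k. rewrite -e in h.
have -> : (m + m - (m - k) = m + k)%N by lia.
have := bin2_2 k; case: k hk h e => [|k] hk h e; first by rewrite subn0 addn0 muln0 bin0n; lia.
move=> /= h2. nia.
Qed.


Definition Tm (m : nat) : PZ := \prod_(i < m) ((1 - 'X^(5 * i + 4)) * (1 - 'X^(5 * i + 1))).
Definition Smt (m : nat) : PZ :=
  \sum_(k < m.+1) (-1) ^+ k * qbin ('X^5) (m + m) (k + m) * 'X^(P7 k) +
  \sum_(k < m) (-1) ^+ k.+1 * qbin ('X^5) (m + m) (m - k.+1) * 'X^(Q7 k.+1).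

Lemma prod_negX m : \prod_(i < m) (- ('X^(5 * i) : PZ)) = (-1) ^+ m * 'X^(5 * 'C(m, 2)).
Proof.
elim: m => [|m IH]; first by rewrite big_ord0 bin0n muln0 expr0 mulr1.
rewrite big_ord_recr /= IH bin2S mulnDr exprD exprS; ring.
Qed.

Lemma prod_cst (c : PZ) m : \prod_(i < m) c = c ^+ m.
Proof. by elim: m => [|m IH]; rewrite ?big_ord0 ?expr0 // big_ord_recr IH exprSr. Qed.

Lemma CC_neq0 m : (-1) ^+ m * 'X^(KK m) != 0 :> PZ.
Proof.
rewrite mulf_neq0 ?signr_eq0 //.
by rewrite -size_poly_eq0 size_polyXn.
Qed.

Lemma jtp_fin m : Tm m = Smt m.
Proof.
have H := qbin_thm ('X^5) ('X^(5 * m - 1)) (-1) (m + m).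
rewrite big_split_ord /= in H.
have L1 : \prod_(i < m) ('X^(5 * m - 1) + -1 * ('X^5) ^+ (lshift m i) : PZ)
   = (-1) ^+ m * 'X^(5 * 'C(m, 2)) * \prod_(i < m) (1 - 'X^(5 * i + 4)).
  rewrite -prod_negX [X in _ = _ * X](reindex_inj rev_ord_inj) /= -big_split /=.
  apply: eq_bigr => i _ /=.
  have hi := ltn_ord i.
  rewrite -exprM mulrBr mulr1 !mulNr opprK -exprD mul1r addrC.
  congr (_ + 'X^_).
  lia.
have L2 : \prod_(i < m) ('X^(5 * m - 1) + -1 * ('X^5) ^+ (rshift m i) : PZ)
   = 'X^((5 * m - 1) * m) * \prod_(i < m) (1 - 'X^(5 * i + 1)).
  rewrite exprM -(prod_cst ('X^(5 * m - 1)%N) m) -big_split /=.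
  apply: eq_bigr => i _ /=.
  have hi := ltn_ord i.
  rewrite -exprM mulrBr mulr1 -exprD mulN1r.
  congr (_ - 'X^_ ); lia.
rewrite L1 L2 in H.
apply: (mulfI (CC_neq0 m)).
transitivity ((-1) ^+ m * 'X^(5 * 'C(m, 2)) * \prod_(i < m) (1 - 'X^(5 * i + 4)) *
   ('X^((5 * m - 1) * m) * \prod_(i < m) (1 - 'X^(5 * i + 1))) : PZ).
  by rewrite /Tm big_split /= /KK exprD; ring.
rewrite H.
rewrite -(big_mkord xpredT (fun j : nat => qbin 'X^5 (m + m) j * 'X^5 ^+ 'C(j, 2) * (-1) ^+ j *
       'X^(5 * m - 1)%N ^+ (m + m - j)%N : PZ)).
rewrite (big_cat_nat (n := m)) //; last by lia.
rewrite (big_addn 0 _ m) (_ : ((m + m).+1 - m = m.+1)%N); last by lia.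
rewrite big_nat_rev !big_mkord /Smt mulrDr addrC !big_distrr /=.
congr (_ + _); apply: eq_bigr => k _ /=; last first.
  have hk : (k <= m)%N by rewrite -ltnS.
  have e := @expoP m k hk.
  rewrite -!exprM.
  transitivity (qbin 'X^5 (m + m) (k + m) * (-1) ^+ k * (-1) ^+ m *
     ('X^(5 * 'C(k + m, 2)) * 'X^((5 * m - 1) * (m + m - (k + m)))) : PZ).
    by rewrite exprD; ring.
  rewrite -exprD e exprD; ring.
have hk : (k.+1 <= m)%N by [].
have e := @expoQ m k.+1 hk.
rewrite add0n -!exprM.
have s1 : (-1) ^+ m = (-1) ^+ (m - k.+1) * (-1) ^+ k.+1 :> PZ by rewrite -exprD subnK.
have s2 : (-1) ^+ k.+1 * (-1) ^+ k.+1 = 1 :> PZ.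
  by rewrite -exprD addnn -mul2n exprM expr2 mulrNN mulr1 expr1n.
symmetry.
transitivity ((-1) ^+ (m - k.+1) * ((-1) ^+ k.+1 * (-1) ^+ k.+1) *
   (qbin 'X^5 (m + m) (m - k.+1) * ('X^(KK m) * 'X^(Q7 k.+1))) : PZ).
  by rewrite s1; ring.
rewrite s2 -exprD -e exprD; ring.
Qed.


Lemma eqm1X n a : (n < a)%N -> eqm n (1 - 'X^a) 1.
Proof.
move=> h i hi; rewrite coefB coefXn coef1.
have -> : (i == a) = false by apply/negbTE; rewrite neq_ltn (leq_ltn_trans hi h).
by rewrite subr0.
Qed.

Lemma qp_trunc n r : (n <= r)%N -> eqm n (qp 'X^5 r) (qp 'X^5 n).
Proof.
move=> h; rewrite /qp; apply: (@prod_trunc n (fun i => 1 - ('X^5) ^+ i.+1)) => // i hi.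
rewrite -exprM; apply: eqm1X; lia.
Qed.

Definition HH n : PZ := \prod_(i < n) \sum_(t < n.+1) (('X^5) ^+ i.+1) ^+ t.

Lemma geom (x : PZ) n : (1 - x) * \sum_(t < n.+1) x ^+ t = 1 - x ^+ n.+1.
Proof.
have := subrX1 x n.+1 => E.
by rewrite -opprB mulNr -E opprB.
Qed.

Lemma EH n : eqm n (qp 'X^5 n * HH n) 1.
Proof.
rewrite /qp /HH -big_split /=.
rewrite -[X in eqm _ _ X](expr1n _ n) -[X in eqm _ _ X](prod_cst 1 n).
apply: eqm_prod => i _; rewrite geom -!exprM; apply: eqm1X.
by rewrite (leq_trans (ltnSn n)) // leq_pmull.
Qed.

Lemma qbin_inv n N j : (n <= j)%N -> (n <= N - j)%N -> (j <= N)%N ->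
  eqm n (qbin 'X^5 N j * qp 'X^5 n) 1.
Proof.
move=> h1 h2 h3.
set E := qp 'X^5 n.
apply: eqm_trans (_ : eqm n _ (qbin 'X^5 N j * E * (E * HH n))) _.
  rewrite -[X in eqm _ X _]mulr1; apply: eqmM; first exact: eqm_refl.
  exact: eqm_sym (EH n).
rewrite mulrA.
apply: eqm_trans (_ : eqm n _ (qbin 'X^5 N j * qp 'X^5 j * qp 'X^5 (N - j) * HH n)) _.
  apply: eqmM; last exact: eqm_refl.
  rewrite -mulrA -[X in eqm _ _ X]mulrA; apply: eqmM; first exact: eqm_refl.
  apply: eqmM; apply: eqm_sym; exact: qp_trunc.
rewrite qbin_prod //.
apply: eqm_trans (EH n); apply: eqmM; last exact: eqm_refl.
exact: qp_trunc (leq_trans h1 h3).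
Qed.

Lemma P7_ge k : (k <= P7 k)%N. Proof. rewrite P7E; lia. Qed.
Lemma Q7_ge k : (k <= Q7 k)%N. Proof. rewrite Q7E; lia. Qed.

Definition Gth (L : nat) : PZ :=
  1 + \sum_(k < L) (-1) ^+ k.+1 * ('X^(P7 k.+1) + 'X^(Q7 k.+1)).

Lemma eqm_small2 n (c : PZ) a b : (n < a)%N -> (n < b)%N -> eqm n (c * ('X^a + 'X^b)) 0.
Proof.
move=> ha hb i hi; rewrite coef0 mulrDr coefD !coefMXn.
by rewrite (leq_ltn_trans hi ha) (leq_ltn_trans hi hb) addr0.
Qed.

Lemma Gth_trunc n L : (n <= L)%N -> eqm n (Gth L) (Gth n).
Proof.
move=> h; apply: eqmD; first exact: eqm_refl.
apply: (@sum_trunc n (fun k => (-1) ^+ k.+1 * ('X^(P7 k.+1) + 'X^(Q7 k.+1)))) => // k hk.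
by apply: eqm_small2; [apply: leq_trans (P7_ge _) | apply: leq_trans (Q7_ge _)].
Qed.

Lemma term_lem n (s q : PZ) e : ((e <= n)%N -> eqm n (q * qp 'X^5 n) 1) ->
  eqm n (s * q * 'X^e * qp 'X^5 n) (s * 'X^e).
Proof.
move=> h; case: (ltnP n e) => he.
  move=> i hi; rewrite -mulrA (mulrC 'X^e) mulrA !coefMXn.
  by rewrite (leq_ltn_trans hi he).
rewrite (_ : s * q * 'X^e * qp 'X^5 n = (s * 'X^e) * (q * qp 'X^5 n)); last by ring.
rewrite -[X in eqm _ _ X]mulr1; apply: eqmM; [exact: eqm_refl | exact: h].
Qed.

Lemma TE n m : (n.*2 < m)%N -> eqm n (Tm m * qp 'X^5 n) (Gth m).
Proof.
move=> hm.
rewrite jtp_fin /Smt mulrDl !mulr_suml big_ord_recl /= /Gth.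
rewrite [in X in eqm _ _ X](eq_bigr (fun k : 'I_m => (-1) ^+ k.+1 * 'X^(P7 k.+1) + (-1) ^+ k.+1 * 'X^(Q7 k.+1))); last by move=> k _; rewrite mulrDr.
rewrite big_split /= !addrA.
apply: eqmD; first apply: eqmD.
- apply: eqm_trans (@term_lem n ((-1) ^+ 0) (qbin 'X^5 (m + m) (0 + m)) (P7 0) _) _.
    move=> _; apply: qbin_inv; lia.
  by rewrite expr0 mul1r (_ : P7 0 = 0%N) // expr0; exact: eqm_refl.
- apply: eqm_sum => k _; rewrite /bump /= add1n.
  apply: term_lem => he.
  have := P7_ge k.+1 => hk.
  apply: qbin_inv; lia.
- apply: eqm_sum => k _.
  apply: term_lem => he.
  have := Q7_ge k.+1 => hk.
  apply: qbin_inv; lia.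
Qed.


Definition P23 : pred nat := fun a => ((a %% 5 == 2) || (a %% 5 == 3))%N.

Definition Dd (i : nat) : PZ := if P23 i.+1 then 1 else 1 - 'X^(i.+1).

Lemma blocks M : \prod_(b < M) ((1 - 'X^(5 * b + 4)) * (1 - 'X^(5 * b + 1)) * (1 - ('X^5) ^+ b.+1) : PZ)
  = \prod_(i < 5 * M) Dd i.
Proof.
elim: M => [|M IH]; first by rewrite muln0 !big_ord0.
rewrite big_ord_recr /= IH (_ : (5 * M.+1 = (5 * M).+4.+1)%N); last by lia.
rewrite !big_ord_recr /= /Dd.
have r1 : P23 (5 * M).+1 = false by rewrite /P23; apply/negbTE; rewrite negb_or; apply/andP; split; apply/eqP; lia.
have r2 : P23 (5 * M).+2 = true by rewrite /P23; apply/orP; left; apply/eqP; lia.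
have r3 : P23 (5 * M).+3 = true by rewrite /P23; apply/orP; right; apply/eqP; lia.
have r4 : P23 (5 * M).+4 = false by rewrite /P23; apply/negbTE; rewrite negb_or; apply/andP; split; apply/eqP; lia.
have r5 : P23 (5 * M).+4.+1 = false by rewrite /P23; apply/negbTE; rewrite negb_or; apply/andP; split; apply/eqP; lia.
rewrite r1 r2 r3 r4 r5 -exprM (_ : (5 * M.+1 = (5 * M).+4.+1)%N); last by lia.
rewrite addn4 addn1; ring.
Qed.

Lemma factor_lem n i : eqm n (Dd i * \sum_(t < n.+1) Fp predT i t) (\sum_(t < n.+1) Fp P23 i t).
Proof.
rewrite /Dd; case h: (P23 i.+1).
  rewrite mul1r; apply: eqm_sum => t _; rewrite /Fp h orbT /=; exact: eqm_refl.
rewrite [X in eqm _ _ X]big_ord_recl [in X in eqm _ _ X]big1; last first.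
  by move=> t _; rewrite /Fp h orbF /bump /=.
rewrite /Fp /= muln0 expr0 addr0.
rewrite (eq_bigr (fun t : 'I_n.+1 => ('X^(i.+1)) ^+ t)); last first.
  by move=> t _; rewrite /Fp orbT exprM.
rewrite geom -exprM; apply: eqm1X.
by rewrite mulSn; lia.
Qed.

Lemma TEPg n m : (n <= m)%N -> eqm n (Tm m * qp 'X^5 n * PG predT n) (PG P23 n).
Proof.
move=> hm.
apply: eqm_trans (_ : eqm n _ (Tm n * qp 'X^5 n * PG predT n)) _.
  apply: eqmM; last exact: eqm_refl.
  apply: eqmM; last exact: eqm_refl.
  rewrite /Tm; apply: (@prod_trunc n (fun i => (1 - 'X^(5 * i + 4)) * (1 - 'X^(5 * i + 1)))) => // i hi.
  rewrite -[X in eqm _ _ X]mulr1; apply: eqmM; apply: eqm1X; lia.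
rewrite /Tm /qp -big_split /= blocks.
apply: eqm_trans (_ : eqm n _ (\prod_(i < n) Dd i * PG predT n)) _.
  apply: eqmM; last exact: eqm_refl.
  apply: prod_trunc; first by lia.
  move=> i hi; rewrite /Dd; case: ifP => _; first exact: eqm_refl.
  apply: eqm1X; lia.
rewrite /PG -big_split /=; apply: eqm_prod => i _; exact: factor_lem.
Qed.

Lemma coef_sign j i (p : PZ) : ((-1) ^+ j * p)`_i = (-1) ^+ j * p`_i.
Proof.
elim: j => [|j IH]; first by rewrite !expr0 !mul1r.
by rewrite !exprS -!mulrA !mulN1r coefN IH.
Qed.

Lemma npartZ_sub n a : npartZ (n%:Z - a%:Z) = if (n < a)%N then 0 else (npart (n - a))%:Z.
Proof.
case: ltnP => h.
  rewrite (_ : n%:Z - a%:Z = Negz (a - n).-1) //; rewrite NegzE; lia.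
by rewrite subzn.
Qed.

Lemma coefXPg n a : ('X^a * PG predT n)`_n = npartZ (n%:Z - a%:Z).
Proof.
rewrite coefXnM npartZ_sub; case: ifP => // _.
by rewrite PG_coef_le ?leq_subr // natz.
Qed.

Lemma Gth_coef L n : (Gth L * PG predT n)`_n = (npart n)%:Z +
  \sum_(k < L) (-1) ^+ k.+1 * (npartZ (n%:Z - (P7 k.+1)%:Z) + npartZ (n%:Z - (Q7 k.+1)%:Z)).
Proof.
rewrite /Gth mulrDl mul1r coefD PG_coef natz mulr_suml coef_sum; congr (_ + _).
apply: eq_bigr => k _; rewrite -mulrA coef_sign mulrDl coefD !coefXPg //.
Qed.

Theorem theorem2p2 (n N : nat) (hN : (n < N)%N) :
  (npart23mod5 n)%:Z =
  (npart n)%:Z + \sum_(1 <= k < N)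
     (-1) ^+ k * (npartZ (n%:Z - (P7 k)%:Z) + npartZ (n%:Z - (Q7 k)%:Z)).
Proof.
rewrite big_add1 big_mkord -Gth_coef.
have hN1 : (n <= N.-1)%N by lia.
have E : eqm n (Gth N.-1 * PG predT n) (PG P23 n).
  apply: eqm_trans (_ : eqm n _ (Gth n * PG predT n)) _.
    by apply: eqmM; [exact: Gth_trunc | exact: eqm_refl].
  apply: eqm_trans (_ : eqm n _ (Gth n.*2.+1 * PG predT n)) _.
    by apply: eqmM; [apply: eqm_sym; apply: Gth_trunc; lia | exact: eqm_refl].
  apply: eqm_trans (_ : eqm n _ (Tm n.*2.+1 * qp 'X^5 n * PG predT n)) _.
    by apply: eqmM; [apply: eqm_sym; apply: TE | exact: eqm_refl].
  apply: TEPg; lia.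
by rewrite (E n (leqnn n)) PG_coef natz.
Qed.
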